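(* Let $\Gamma$ be a simple graph on a finite set $X$ with $|X|\ge3$. If for some point $x\in X$ the graph $\Gamma^x$ is extensible, then for every $y\in X$ the graph $\Gamma^y$ is extensible, and the parameters of $\Gamma^x$ and $\Gamma^y$ are equal.
   Context: A finite simple graph $(\Lambda,Y)$ is extensible with parameters $(t,s,\bar s)$ (nonnegative integers) if: (1) $\Lambda$ has diameter $2$; (2) for every $y\in Y$, with $\Lambda(y,d)$ the set of vertices at distance $d$ from $y$: (a) $|\Lambda(y,1)|=2s$; (b) $|\Lambda(y,2)|=2\bar s$; (c) every $z\in\Lambda(y,1)$ is adjacent to exactly $\bar s$ points of $\Lambda(y,2)$ and exactly $t=2s-\bar s-1$ points of $\Lambda(y,1)$; (d) every $z\in\Lambda(y,2)$ is adjacent to exactly $s$ points of $\Lambda(y,2)$ and exactly $s$ points of $\Lambda(y,1)$; (3) every edge lies in exactly $t$ triangles; (4) $|Y|=1+2s+2\bar s$. The matrix of a graph on $X$ has entry $-1$ at $(i,j)$ if $i\ne j$ are adjacent and $1$ otherwise; two graphs with matrices $\mathcal{E},\mathcal{E}'$ are associated if $\varepsilon'_{i,j}=\nu_i\nu_j\varepsilon_{i,j}$ for some $\nu_i\in\{\pm1\}$. ${}^x\Gamma$ is the unique graph associated to $\Gamma$ in which $x$ is isolated, and $\Gamma^x$ is the graph induced by ${}^x\Gamma$ on $X\setminus\{x\}$. *)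

(* Defs.v *)
From mathcomp Require Import all_boot.
Set Implicit Arguments. Unset Strict Implicit. Unset Printing Implicit Defensive.

Definition simple_graph (V : finType) (e : rel V) : Prop :=
  symmetric e /\ irreflexive e.

Section Ext.
Variables (V : finType) (e : rel V).

Definition nbhd1 (y : V) : {set V} := [set z | e y z].
Definition nbhd2 (y : V) : {set V} :=
  [set z | [&& z != y, ~~ e y z & [exists w, e y w && e w z]]].

Definition diameter2 : Prop :=
  (forall y z : V, y != z -> e y z \/ exists w, e y w && e w z) /\
  (exists y z : V, z \in nbhd2 y).

Definition extensible_with (t s sb : nat) : Prop :=
  [/\ diameter2,
      (forall y : V,
         [/\ #|nbhd1 y| = 2 * s,
             #|nbhd2 y| = 2 * sb,
             t + sb + 1 = 2 * s,
             (forall z, z \in nbhd1 y ->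
                #|nbhd2 y :&: nbhd1 z| = sb /\ #|nbhd1 y :&: nbhd1 z| = t) &
             (forall z, z \in nbhd2 y ->
                #|nbhd2 y :&: nbhd1 z| = s /\ #|nbhd1 y :&: nbhd1 z| = s)]),
      (forall y z : V, e y z -> #|[set w | e y w && e z w]| = t) &
      #|V| = 1 + 2 * s + 2 * sb].

Definition extensible : Prop := exists t s sb, extensible_with t s sb.
End Ext.
Arguments extensible_with V e t s sb : clear implicits.
Arguments extensible V e : clear implicits.

(* Gamma^x: the graph induced on X \ {x} by the unique graph associated
   (by switching) to Gamma in which x is isolated.  With nu_i = eps_{x,i},
   eps'_{ij} = eps_{xi} eps_{xj} eps_{ij}, i.e. for i <> j:
   i ~' j  iff  (i~j) xor (x~i) xor (x~j). *)
Definition switch_del (T : finType) (e : rel T) (x : T) : rel {y : T | y != x} :=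
  fun i j => (val i != val j) &&
             (e (val i) (val j) (+) e x (val i) (+) e x (val j)).
Arguments switch_del {T} e x.

(* Main.v *)
Require Import Defs.
From mathcomp Require Import all_boot.
From mathcomp Require Import zify.
Set Implicit Arguments. Unset Strict Implicit. Unset Printing Implicit Defensive.

Section Gen.
Variable T : finType.

Definition sw (e : rel T) (x : T) : rel T :=
  fun i j => (i != j) && (e i j (+) e x i (+) e x j).
Definition cnt (P : pred T) : nat := \sum_(w : T) nat_of_bool (P w).
Arguments cnt : simpl never.
Definition allT : pred T := fun _ => true.

Lemma sumn_cnt (fs : seq (pred T)) :
  sumn (map cnt fs) = \sum_(w : T) sumn [seq nat_of_bool (f w) | f <- fs].
Proof.
elim: fs => [|f fs IH] /=; first by rewrite big1.
by rewrite IH /cnt -big_split.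
Qed.

Lemma cnt_lin (fs gs : seq (pred T)) :
  (forall w, sumn [seq nat_of_bool (f w) | f <- fs] =
             sumn [seq nat_of_bool (g w) | g <- gs]) ->
  sumn (map cnt fs) = sumn (map cnt gs).
Proof. by move=> H; rewrite !sumn_cnt; apply: eq_bigr => w _. Qed.

Lemma cnt_ext (P P' : pred T) : (forall w, P w = P' w) -> cnt P = cnt P'.
Proof. by move=> H; apply: eq_bigr => w _; rewrite H. Qed.

Lemma cnt_card (P : pred T) : cnt P = #|[set w | P w]|.
Proof.
rewrite -sum1_card big_mkcond /=; apply: eq_bigr => w _.
by rewrite inE; case: (P w).
Qed.

Lemma cnt_T : cnt allT = #|T|.
Proof. by rewrite cnt_card -cardsT; congr #|_|; apply/setP => w; rewrite !inE. Qed.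

Lemma cnt1 (z : T) : cnt (fun w => w == z) = 1.
Proof. by rewrite cnt_card (_ : [set w | w == z] = [set z]) ?cards1 //; apply/setP => w; rewrite !inE. Qed.

Lemma cnt_gt0 (P : pred T) : 0 < cnt P -> exists w, P w.
Proof. by rewrite cnt_card => /card_gt0P [w]; rewrite inE; exists w. Qed.

Lemma sub_card (y : T) (P : pred T) :
  #|[set j : {z : T | z != y} | P (val j)]| = cnt (fun w => (w != y) && P w).
Proof.
rewrite cnt_card -(card_imset _ val_inj); apply: eq_card => w.
rewrite inE; apply/imsetP/idP => [[j]|/andP[wy Pw]].
  by rewrite inE => Pj ->; rewrite (valP j).
by exists (exist _ w wy) => //; rewrite inE.
Qed.

Lemma card_sub (y : T) : #|{: {z : T | z != y}}| = #|T|.-1.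
Proof. by rewrite card_sig -(cardC1 y). Qed.

Definition srg (q : rel T) (x : T) (t s sb : nat) : Prop :=
  [/\ cnt allT = 2 + 2 * s + 2 * sb, t + sb + 1 = 2 * s, 0 < sb,
      forall u, u != x -> cnt (q u) = 2 * s &
      forall u v, u != x -> v != x -> u != v ->
        cnt (fun w => q u w && q v w) = if q u v then t else s].

Lemma srg_ext (q q' : rel T) x t s sb :
  (forall i j, q i j = q' i j) -> srg q x t s sb -> srg q' x t s sb.
Proof.
move=> H [H1 H2 H3 H4 H5]; split => //.
  by move=> u ux; rewrite -(H4 u ux); apply: cnt_ext => w; rewrite H.
move=> u v ux vx uv; rewrite -H -(H5 u v ux vx uv).
by apply: cnt_ext => w; rewrite !H.
Qed.

Variable e : rel T.
Hypothesis esym : symmetric e.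
Hypothesis eirr : irreflexive e.

Lemma sw_sym x : symmetric (sw e x).
Proof. by move=> i j; rewrite /sw eq_sym esym -addbA (addbC (e x i)) addbA. Qed.

Lemma sw_irr x : irreflexive (sw e x).
Proof. by move=> i; rewrite /sw eqxx. Qed.

Lemma sw_iso x w : sw e x x w = false.
Proof. by rewrite /sw eirr addbF addbb andbF. Qed.

Lemma sw_sw x y i j : sw (sw e x) y i j = sw e y i j.
Proof.
rewrite /sw; case: (eqVneq i j) => [->|ij] //=.
case: (eqVneq y i) => [yi|yi] /=.
  subst y; rewrite ij /= eirr.
  by case: (e i j); case: (e x i); case: (e x j).
case: (eqVneq y j) => [yj|yj] /=.
  subst y; rewrite eirr.
  by case: (e i j); case: (e x i); case: (e x j); case: (e j i).
by case: (e i j); case: (e x i); case: (e x j); case: (e y i); case: (e x y); case: (e y j).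
Qed.

End Gen.
Section Core.
Variable T : finType.
Arguments cnt : simpl never.

Lemma srg_core (r : rel T) x y t s sb :
  symmetric r -> irreflexive r -> (forall w, r x w = false) -> y != x ->
  srg r x t s sb -> srg (sw r y) y t s sb.
Proof.
move=> rs ri rx yx [HT Hts Hsb Hd Hp].
have qE : forall u w, sw r y u w = r u w (+) r y u (+) r y w.
  move=> u w; rewrite /sw; case: (eqVneq u w) => [->|//].
  by rewrite ri addFb addbb.
have ryx : r y x = false by rewrite rs rx.
have Hx : forall v, v != y -> v != x ->
    cnt (fun w => sw r y x w && sw r y v w) = if sw r y x v then t else s.
  move=> v vy vx; have yv : y != v by rewrite eq_sym.
  have := Hp y v yx vx yv; rewrite qE rx ryx /=.
  case ayv: (r y v).
    move=> <-; apply: cnt_ext => w; rewrite !qE rx ryx ayv /=.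
    by case: (r y w); case: (r v w).
  move=> Hc.
  have H : sumn (map (@cnt T) [:: (fun w => sw r y x w && sw r y v w);
                            (fun w => r y w && r v w)]) =
           sumn (map (@cnt T) [:: r y]).
    apply: cnt_lin => w /=; rewrite !qE rx ryx ayv /=.
    by case: (r y w); case: (r v w).
  rewrite /= Hc Hd // in H; clear -H Hts; lia.
split => //.
  move=> u uy; case: (eqVneq u x) => [->|ux].
    by rewrite -(Hd y yx); apply: cnt_ext => w; rewrite qE rx ryx.
  have yu : y != u by rewrite eq_sym.
  have := Hp y u yx ux yu.
  case ayu: (r y u) => /= Hc.
    have H : sumn (map (@cnt T) [:: sw r y u; r u; r y]) =
             sumn (map (@cnt T) [:: @allT T; (fun w => r y w && r u w);
                                      (fun w => r y w && r u w)]).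
      apply: cnt_lin => w /=; rewrite qE ayu /allT.
      by case: (r y w); case: (r u w).
    rewrite /= Hc !Hd // HT in H; clear -H Hts; lia.
  have H : sumn (map (@cnt T) [:: sw r y u; (fun w => r y w && r u w);
                              (fun w => r y w && r u w)]) =
           sumn (map (@cnt T) [:: r u; r y]).
    apply: cnt_lin => w /=; rewrite qE ayu.
    by case: (r y w); case: (r u w).
  rewrite /= Hc !Hd // in H; clear -H Hts; lia.
move=> u v uy vy uv.
case: (eqVneq u x) => [uxe|ux]; first by subst u; apply: Hx => //; rewrite eq_sym.
case: (eqVneq v x) => [vxe|vx].
  subst v; rewrite (sw_sym rs) -(Hx u uy ux); apply: cnt_ext => w; exact: andbC.
have yu : y != u by rewrite eq_sym.
have yv : y != v by rewrite eq_sym.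
have Huv := Hp u v ux vx uv.
have Hyu := Hp y u yx ux yu.
have Hyv := Hp y v yx vx yv.
have Hdu := Hd u ux; have Hdv := Hd v vx; have Hdy := Hd y yx.
rewrite qE.
case ayu: (r y u) Hyu => /= Hyu; case ayv: (r y v) Hyv => /= Hyv.
- have H : sumn (map (@cnt T) [:: (fun w => sw r y u w && sw r y v w); r u; r v; r y]) =
           sumn (map (@cnt T) [:: (fun w => r u w && r v w); @allT T;
                 (fun w => r y w && r u w); (fun w => r y w && r v w)]).
    apply: cnt_lin => w /=; rewrite !qE ayu ayv /allT.
    by case: (r y w); case: (r u w); case: (r v w).
  rewrite /= in H; rewrite Huv Hyu Hyv Hdu Hdv Hdy HT in H.
  case: (r u v) H => /= H; clear -H Hts; lia.
- have H : sumn (map (@cnt T) [:: (fun w => sw r y u w && sw r y v w);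
                 (fun w => r u w && r v w); (fun w => r y w && r v w)]) =
           sumn (map (@cnt T) [:: (fun w => r y w && r u w); r v]).
    apply: cnt_lin => w /=; rewrite !qE ayu ayv.
    by case: (r y w); case: (r u w); case: (r v w).
  rewrite /= in H; rewrite Huv Hyu Hyv Hdv in H.
  case: (r u v) H => /= H; clear -H Hts; lia.
- have H : sumn (map (@cnt T) [:: (fun w => sw r y u w && sw r y v w);
                 (fun w => r u w && r v w); (fun w => r y w && r u w)]) =
           sumn (map (@cnt T) [:: (fun w => r y w && r v w); r u]).
    apply: cnt_lin => w /=; rewrite !qE ayu ayv.
    by case: (r y w); case: (r u w); case: (r v w).
  rewrite /= in H; rewrite Huv Hyu Hyv Hdu in H.
  case: (r u v) H => /= H; clear -H Hts; lia.
- have H : sumn (map (@cnt T) [:: (fun w => sw r y u w && sw r y v w);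
                 (fun w => r y w && r u w); (fun w => r y w && r v w)]) =
           sumn (map (@cnt T) [:: (fun w => r u w && r v w); r y]).
    apply: cnt_lin => w /=; rewrite !qE ayu ayv.
    by case: (r y w); case: (r u w); case: (r v w).
  rewrite /= in H; rewrite Huv Hyu Hyv Hdy in H.
  case: (r u v) H => /= H; clear -H Hts; lia.
Qed.

End Core.

Section Trans.
Variable T : finType.
Variable e : rel T.
Hypothesis esym : symmetric e.
Hypothesis eirr : irreflexive e.
Arguments cnt : simpl never.

Lemma ext_to_srg x t s sb :
  extensible_with _ (switch_del e x) t s sb -> srg (sw e x) x t s sb.
Proof.
case=> [[dia1 [i0 [j0 Hj0]]] Hv Htri Hcard].
have [_ H2 Hts _ _] := Hv i0.
split => //.
- rewrite cnt_T; move: Hcard; rewrite card_sub.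
  have : 0 < #|T| by apply/card_gt0P; exists x.
  lia.
- have : 0 < #|nbhd2 (switch_del e x) i0| by apply/card_gt0P; exists j0.
  rewrite H2; lia.
- move=> u ux; have [H1 _ _ _ _] := Hv (exist _ u ux).
  rewrite -H1.
  have -> : nbhd1 (switch_del e x) (exist _ u ux) =
     [set j : {z : T | z != x} | sw e x u (val j)] by apply/setP => j; rewrite !inE.
  rewrite sub_card; apply: cnt_ext => w.
  case: (eqVneq w x) => [->|//]; by rewrite (sw_sym esym) sw_iso.
move=> u v ux vx uv.
have ij : exist _ u ux != exist _ v vx :> {z : T | z != x}.
  by rewrite -val_eqE.
have swx : forall w, sw e x u w && sw e x v w = (w != x) && (sw e x u w && sw e x v w).
  move=> w; case: (eqVneq w x) => [->|//]; by rewrite (sw_sym esym) sw_iso.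
case Euv: (sw e x u v).
  have := Htri (exist _ u ux) (exist _ v vx) Euv.
  have -> : [set w | switch_del e x (exist _ u ux) w && switch_del e x (exist _ v vx) w] =
     [set j : {z : T | z != x} | sw e x u (val j) && sw e x v (val j)] by apply/setP => j; rewrite !inE.
  rewrite (sub_card x (fun w => sw e x u w && sw e x v w)) => <-; exact: cnt_ext.
case: (dia1 _ _ ij) => [E|[w Hw]]; first by have : sw e x u v := E; rewrite Euv.
have Hn2 : exist _ v vx \in nbhd2 (switch_del e x) (exist _ u ux).
  rewrite inE eq_sym ij (_ : switch_del e x (exist _ u ux) (exist _ v vx) = sw e x u v) // Euv /=.
  apply/existsP; by exists w.
have [_ _ _ _ Hd] := Hv (exist _ u ux).
have [_ <-] := Hd _ Hn2.
have -> : nbhd1 (switch_del e x) (exist _ u ux) :&: nbhd1 (switch_del e x) (exist _ v vx)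
   = [set j : {z : T | z != x} | sw e x u (val j) && sw e x v (val j)].
  by apply/setP => j; rewrite !inE.
by rewrite (sub_card x (fun w => sw e x u w && sw e x v w)); apply: cnt_ext.
Qed.

Lemma srg_to_ext y t s sb :
  srg (sw e y) y t s sb -> extensible_with _ (switch_del e y) t s sb.
Proof.
set q := sw e y.
move=> [HT Hts Hsb Hd Hp].
have qsym : symmetric q by exact: sw_sym.
have qirr : irreflexive q by exact: sw_irr.
have qy : forall w, q y w = false by move=> w; exact: sw_iso.
have qwy : forall w, q w y = false by move=> w; rewrite qsym qy.
have qny : forall u, cnt (fun w => (w != y) && q u w) = cnt (q u).
  by move=> u; apply: cnt_ext => w; case: (eqVneq w y) => [->|]; rewrite ?qwy.
have qny2 : forall u v, cnt (fun w => (w != y) && (q u w && q v w)) =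
                        cnt (fun w => q u w && q v w).
  by move=> u v; apply: cnt_ext => w; case: (eqVneq w y) => [->|]; rewrite ?qwy.
have common : forall (i j : {z : T | z != y}), i != j -> ~~ q (val i) (val j) ->
    exists w : {z : T | z != y}, q (val i) (val w) && q (val w) (val j).
  move=> i j ij nq.
  have : 0 < cnt (fun w => q (val i) w && q (val j) w).
    rewrite Hp ?(valP i) ?(valP j) ?val_eqE // (negbTE nq); lia.
  move=> /cnt_gt0 [w /andP[H1 H2]].
  have wy : w != y by apply/eqP => E; rewrite E qwy in H1.
  by exists (exist _ w wy); rewrite /= H1 qsym H2.
have n2E : forall i : {z : T | z != y}, nbhd2 (switch_del e y) i =
    [set j : {z : T | z != y} | (val j != val i) && ~~ q (val i) (val j)].
  move=> i; apply/setP => j; rewrite !inE val_eqE.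
  case: (eqVneq j i) => [//|ji] /=.
  rewrite (_ : switch_del e y i j = q (val i) (val j)) //.
  case nq: (q (val i) (val j)) => //=.
  have ij' : i != j by rewrite eq_sym.
  have [w Hw] := common i j ij' (negbT nq).
  by apply/existsP; exists w.
have Hvert : forall i : {z : T | z != y},
  [/\ #|nbhd1 (switch_del e y) i| = 2 * s,
      #|nbhd2 (switch_del e y) i| = 2 * sb,
      t + sb + 1 = 2 * s,
      (forall z, z \in nbhd1 (switch_del e y) i ->
         #|nbhd2 (switch_del e y) i :&: nbhd1 (switch_del e y) z| = sb /\
         #|nbhd1 (switch_del e y) i :&: nbhd1 (switch_del e y) z| = t) &
      (forall z, z \in nbhd2 (switch_del e y) i ->
         #|nbhd2 (switch_del e y) i :&: nbhd1 (switch_del e y) z| = s /\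
         #|nbhd1 (switch_del e y) i :&: nbhd1 (switch_del e y) z| = s)].
  move=> i; set u := val i.
  have uy : u != y := valP i.
  have quu : q u u = false by exact: qirr.
  have N1 : forall z : {z : T | z != y}, nbhd1 (switch_del e y) z =
       [set j : {z : T | z != y} | q (val z) (val j)].
    by move=> z; apply/setP => j; rewrite !inE.
  have I11 : forall z : {z : T | z != y}, nbhd1 (switch_del e y) i :&: nbhd1 (switch_del e y) z =
       [set j : {z : T | z != y} | q u (val j) && q (val z) (val j)].
    by move=> z; apply/setP => j; rewrite !inE.
  have I21 : forall z : {z : T | z != y}, nbhd2 (switch_del e y) i :&: nbhd1 (switch_del e y) z =
       [set j : {z : T | z != y} | (val j != u) && ~~ q u (val j) && q (val z) (val j)].
    by move=> z; apply/setP => j; rewrite n2E !inE.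
  have key : forall v, v != y -> cnt (fun w => (w != y) && ((w != u) && ~~ q u w && q v w))
          + cnt (fun w => q u w && q v w) + (if q v u then 1 else 0) = 2 * s.
    move=> v vy.
    have H : sumn (map (@cnt T) [:: (fun w => (w != y) && ((w != u) && ~~ q u w && q v w));
                  (fun w => q u w && q v w); (fun w => w == u)]) =
             sumn (map (@cnt T) [:: q v; (fun w => (w == u) && ~~ q v u)]).
      apply: cnt_lin => w /=.
      case: (eqVneq w u) => [->|wu] /=.
        by rewrite uy quu /= (qsym v u); case: (q u v).
      case: (eqVneq w y) => [->|wy] /=; first by rewrite !qwy.
      by case: (q u w); case: (q v w).
    move: H => /=; rewrite cnt1 Hd //.
    have -> : cnt (fun w => (w == u) && ~~ q v u) = if q v u then 0 else 1.
      case: (q v u) => /=.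
        rewrite (cnt_ext (P' := fun _ => false)); last by move=> w; rewrite andbF.
        by rewrite /cnt big1.
      rewrite (cnt_ext (P' := fun w => w == u)) ?cnt1 //.
      by move=> w; rewrite andbT.
    move=> H; case: (q v u) H => /= H; clear -H; lia.
  split => //.
  - by rewrite N1 sub_card qny Hd.
  - rewrite n2E (sub_card y (fun w => (w != u) && ~~ q u w)).
    have H : sumn (map (@cnt T) [:: (fun w => (w != y) && ((w != u) && ~~ q u w));
                  q u; (fun w => w == y); (fun w => w == u)]) =
             sumn (map (@cnt T) [:: @allT T]).
      apply: cnt_lin => w /=; rewrite /allT.
      case: (eqVneq w u) => [->|wu] /=; first by rewrite uy quu (negbTE uy).
      case: (eqVneq w y) => [->|wy] /=; first by rewrite qwy.
      by case: (q u w).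
    move: H => /=; rewrite !cnt1 Hd // HT.
    move=> H; clear -H; lia.
  - move=> z; rewrite inE => quz; have {}quz : q u (val z) := quz.
    have vy : val z != y := valP z.
    have uz : u != val z by apply/eqP => E; rewrite -E quu in quz.
    have Ht : cnt (fun w => q u w && q (val z) w) = t by rewrite Hp // quz.
    have := key _ vy; rewrite qsym quz Ht.
    rewrite I21 I11 (sub_card y (fun w => (w != u) && ~~ q u w && q (val z) w)).
    rewrite (sub_card y (fun w => q u w && q (val z) w)) qny2 Ht => H; split => //; lia.
  - move=> z Hz.
    have /andP[zu nquz] : (val z != u) && ~~ q u (val z) by move: Hz; rewrite n2E inE.
    have vy : val z != y := valP z.
    have Ht : cnt (fun w => q u w && q (val z) w) = s by rewrite Hp // ?(negbTE nquz) // eq_sym.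
    have := key _ vy; rewrite qsym (negbTE nquz) Ht.
    rewrite I21 I11 (sub_card y (fun w => (w != u) && ~~ q u w && q (val z) w)).
    rewrite (sub_card y (fun w => q u w && q (val z) w)) qny2 Ht => H; split => //; lia.
have cardV : #|{: {z : T | z != y}}| = 1 + 2 * s + 2 * sb.
  by rewrite card_sub -cnt_T HT.
split => //.
- split.
    move=> i j ij; case E: (switch_del e y i j); [by left | right].
    have [w Hw] := common i j ij (negbT E); by exists w.
  have : 0 < #|{: {z : T | z != y}}| by rewrite cardV.
  move=> /card_gt0P [i _].
  have [_ H2 _ _ _] := Hvert i.
  have : 0 < #|nbhd2 (switch_del e y) i| by rewrite H2; lia.
  by move=> /card_gt0P [j Hj]; exists i, j.
- move=> i j Eij.
  have -> : [set w | switch_del e y i w && switch_del e y j w] =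
            [set w : {z : T | z != y} | q (val i) (val w) && q (val j) (val w)].
    by apply/setP => w; rewrite !inE.
  rewrite (sub_card y (fun w => q (val i) w && q (val j) w)) qny2 Hp ?(valP i) ?(valP j) //; first by have -> : q (val i) (val j) = true := Eij.
  by rewrite val_eqE; apply/eqP => E; rewrite E /switch_del eqxx in Eij.
Qed.

End Trans.

Theorem proposition5 (T : finType) (e : rel T) :
  simple_graph e -> 3 <= #|T| ->
  forall (x : T) (t s sb : nat),
    extensible_with _ (switch_del e x) t s sb ->
    forall y : T, extensible_with _ (switch_del e y) t s sb.
Proof.
move=> [es ei] _ x t s sb Hx y.
case: (eqVneq y x) => [->|yx]; first exact: Hx.
have S1 := ext_to_srg es ei Hx.
apply: (srg_to_ext es ei).
apply: (srg_ext (q := sw (sw e x) y)); first by move=> i j; exact: sw_sw.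
apply: (srg_core (x := x)).
- exact: sw_sym.
- exact: sw_irr.
- by move=> w; exact: sw_iso.
- exact: yx.
- exact: S1.
Qed.
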